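(* Let $m\ge 2$ be an integer and let $\mathcal{A}\subset\mathbb{R}$ be a finite alphabet. Let $(X^{(j)}_i)_{i\ge 1,\,1\le j\le m}$ be independent and identically distributed random variables with values in $\mathcal{A}$. Let $S:\mathcal{A}^m\to[0,\infty)$ be a function that is not identically zero, is invariant under permutations of its $m$ arguments, satisfies $s^*:=\sup_{x\in\mathcal{A}^m}S(x)<\infty$, and for which there is a constant $D>0$ such that $|S(x)-S(y)|\le D$ whenever $x,y\in\mathcal{A}^m$ differ in at most one coordinate. For $N\in\mathbb{N}$ let $L_N$ be the optimal alignment score of the $m$ words $X^{(j)}_1\cdots X^{(j)}_N$, $j=1,\dots,m$. Then for every $n\in\mathbb{N}$ and every $x>0$, $$\mathbb{P}\big(L_{m^2n}\ge m^2x\big)\le 2^{-m}m^{4m}n^{2m}\Big(\mathbb{P}\big(L_{mn}\ge m(x-s^* )\big)\Big)^{1/m}.$$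
   Context: Alignments and optimal score: for finite words $w^{(1)},\dots,w^{(m)}$ over $\mathcal{A}$ of lengths $\ell_1,\dots,\ell_m$, an alignment is a choice of an integer $k\ge 0$ and, for each $j$, indices $1\le \pi^{(j)}_1<\cdots<\pi^{(j)}_k\le \ell_j$; its score is $\sum_{i=1}^k S(w^{(1)}_{\pi^{(1)}_i},\dots,w^{(m)}_{\pi^{(m)}_i})$. The optimal score $L(w^{(1)};\dots;w^{(m)})$ is the maximum score over all alignments. *)

(* Defs.v *)
From HB Require Import structures.
From mathcomp Require Import all_boot all_order all_algebra all_fingroup finmap.
From mathcomp Require Import all_classical all_reals all_analysis.
Set Implicit Arguments. Unset Strict Implicit. Unset Printing Implicit Defensive.
Import Order.TTheory GRing.Theory Num.Theory.
Local Open Scope ring_scope.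

Section Align.
Variables (R : realType) (A : finType) (m : nat).

Definition words (N : nat) := {ffun 'I_m -> {ffun 'I_N -> A}}.

Definition is_alignment (N k : nat) (pi : {ffun 'I_m -> {ffun 'I_k -> 'I_N}}) : bool :=
  [forall j, forall i1 : 'I_k, forall i2 : 'I_k, (i1 < i2)%N ==> (pi j i1 < pi j i2)%N].

Definition align_score (S : {ffun 'I_m -> A} -> R) (N k : nat) (w : words N)
  (pi : {ffun 'I_m -> {ffun 'I_k -> 'I_N}}) : R :=
  \sum_(i < k) S [ffun j => w j (pi j i)].

(* optimal score: maximum over all alignments (any alignment has k <= N;
   k = 0 gives score 0, so 0 is a correct default for the max) *)
Definition opt_score (S : {ffun 'I_m -> A} -> R) (N : nat) (w : words N) : R :=
  \big[Num.max/0]_(k < N.+1)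
     \big[Num.max/0]_(pi : {ffun 'I_m -> {ffun 'I_k -> 'I_N}} | is_alignment pi)
        align_score S w pi.

(* P(L_N >= t) when all letters X^(j)_i are i.i.d. with law p on A:
   the law of (X^(j)_i)_{i<=N, j<=m} is the product measure. *)
Definition prob_L_ge (p : A -> R) (S : {ffun 'I_m -> A} -> R) (N : nat) (t : R) : R :=
  \sum_(w : words N | t <= opt_score S w) \prod_(j < m) \prod_(i < N) p (w j i).

Definition smax (S : {ffun 'I_m -> A} -> R) : R := \big[Num.max/0]_x S x.

End Align.

(* Main.v *)
Require Import Defs.
From HB Require Import structures.
From mathcomp Require Import all_boot all_order all_algebra all_fingroup finmap.
From mathcomp Require Import all_classical all_reals all_analysis.
From mathcomp Require Import ring lra zify.
From Stdlib Require Import Lia.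
Set Implicit Arguments. Unset Strict Implicit. Unset Printing Implicit Defensive.
Import Order.TTheory GRing.Theory Num.Theory.
Local Open Scope ring_scope.

Section PF.
Variables (R : realType) (A : finType) (p : A -> R).
Hypothesis hp1 : \sum_a p a = 1.

Definition wt (X : finType) (u : {ffun X -> A}) : R := \prod_x p (u x).

Lemma prod_pick (X Y : finType) (g : Y -> X) (ginj : injective g) (F : X -> Y -> R) :
  \prod_x (if [pick y | g y == x] is Some y then F x y else 1) = \prod_y F (g y) y.
Proof.
rewrite (bigID (fun x => x \in codom g)) /=.
rewrite [X in _ * X]big1 ?mulr1; last first.
  move=> x xn; case: pickP => // y /eqP gy; case/negP: xn; rewrite -gy; exact: codom_f.
rewrite -big_uniq /=; last by rewrite map_inj_uniq ?enum_uniq.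
rewrite big_image /=; apply: eq_bigr => y _.
case: pickP => [y' /eqP /ginj -> //|/(_ y)]; by rewrite eqxx.
Qed.

Lemma prod_ind (Y : finType) (f g : Y -> A) :
  \prod_y ((f y == g y)%:R : R) = ([ffun y => f y] == [ffun y => g y])%:R.
Proof.
case: eqP => [/ffunP E|NE].
  by apply: big1 => y _; have := E y; rewrite !ffunE => ->; rewrite eqxx.
have [y Hy] : exists y, f y != g y.
  apply/existsP; rewrite -negb_forall; apply/negP => /forallP H; apply: NE; apply/ffunP=> y.
  by rewrite !ffunE; apply/eqP; by move: (H y); case: eqP.
by rewrite (bigD1 y) //= (negbTE Hy) mul0r.
Qed.

Lemma pf_point (X Y : finType) (g : Y -> X) (ginj : injective g) (v : {ffun Y -> A}) :
  \sum_(u : {ffun X -> A}) wt u * ([ffun y => u (g y)] == v)%:R = wt v.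
Proof.
pose h x a := p a * (if [pick y | g y == x] is Some y then ((a == v y)%:R : R) else 1).
transitivity (\sum_(u : {ffun X -> A}) \prod_x h x (u x)).
  apply: eq_bigr => u _; rewrite /h big_split /=; congr (_ * _).
  rewrite (prod_pick ginj (fun x y => ((u x == v y)%:R : R))).
  rewrite prod_ind; congr ((_ == _)%:R); apply/ffunP => y; by rewrite !ffunE.
rewrite -bigA_distr_bigA /= /wt -(prod_pick ginj (fun x y => p (v y))).
apply: eq_bigr => x _; rewrite /h; case: pickP => [y _|_].
  rewrite (bigD1 (v y)) //= eqxx mulr1 big1 ?addr0 // => a /negbTE ->; by rewrite mulr0.
by under eq_bigr do rewrite mulr1.
Qed.

Lemma pf (X Y : finType) (g : Y -> X) (ginj : injective g) (F : {ffun Y -> A} -> R) :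
  \sum_(u : {ffun X -> A}) wt u * F [ffun y => u (g y)] = \sum_v wt v * F v.
Proof.
transitivity (\sum_(u : {ffun X -> A}) \sum_v wt u * ([ffun y => u (g y)] == v)%:R * F v).
  apply: eq_bigr => u _; rewrite (bigD1 [ffun y => u (g y)]) //= eqxx mulr1 big1 ?addr0 //.
  by move=> v /negbTE; rewrite eq_sym => ->; rewrite mulr0 mul0r.
rewrite exchange_big /=; apply: eq_bigr => v _.
by rewrite -big_distrl /= pf_point.
Qed.

Lemma flat_sum (I J : finType) (F : {ffun I -> {ffun J -> A}} -> R) :
  \sum_(W : {ffun I -> {ffun J -> A}}) (\prod_i \prod_j p (W i j)) * F W =
  \sum_(u : {ffun I * J -> A}) wt u * F [ffun i => [ffun j => u (i, j)]].
Proof.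
rewrite (reindex (fun u : {ffun I * J -> A} => [ffun i => [ffun j => u (i, j)]])) /=.
  apply: eq_bigr => u _; congr (_ * _); rewrite /wt pair_big /=.
  by apply: eq_bigr => [[i j]] _; rewrite !ffunE.
exists (fun W : {ffun I -> {ffun J -> A}} => [ffun x => W x.1 x.2]) => [u _|W _].
  by apply/ffunP => [[i j]]; rewrite !ffunE.
by apply/ffunP => i; apply/ffunP => j; rewrite !ffunE.
Qed.

End PF.

Section Al.
Variables (R : realType) (A : finType) (m : nat) (S : {ffun 'I_m -> A} -> R).
Hypothesis m0 : (0 < m)%N.

Definition col N := {ffun 'I_m -> 'I_N}.
Definition ltc N : rel (col N) := fun c1 c2 => [forall j, (c1 j < c2 j)%N].
Lemma ltc_trans N : transitive (@ltc N).
Proof.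
move=> c2 c1 c3 /forallP H1 /forallP H2; apply/forallP => j.
exact: ltn_trans (H1 j) (H2 j).
Qed.
Definition colv N (w : words A m N) (c : col N) := S [ffun j => w j (c j)].

Lemma opt_ge0 N (w : words A m N) : 0 <= opt_score S w.
Proof. exact: bigmax_ge_id. Qed.

Lemma size_sorted_le N (s : seq (col N)) : sorted (@ltc N) s -> (size s <= N)%N.
Proof.
move=> ss; pose j0 := Ordinal m0.
pose s0 := map (fun c : col N => nat_of_ord (c j0)) s.
have ss0 : sorted ltn s0.
  rewrite /s0 sorted_map; apply: sub_sorted ss => c1 c2 /forallP; exact.
have -> : size s = size s0 by rewrite size_map.
rewrite -(size_iota 0 N); apply: uniq_leq_size.
  exact: (sorted_uniq ltn_trans ltnn).
by move=> i /mapP [c _ ->]; rewrite mem_iota /= ltn_ord.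
Qed.

Lemma lift_le N (w : words A m N) (s : seq (col N)) :
  sorted (@ltc N) s -> \sum_(c <- s) colv w c <= opt_score S w.
Proof.
case: s => [_|c0 s']; first by rewrite big_nil opt_ge0.
set s := c0 :: s' => ss.
have hk : (size s < N.+1)%N by rewrite ltnS size_sorted_le.
pose pi := [ffun j => [ffun i : 'I_(size s) => nth c0 s i j]].
have hal : is_alignment pi.
  apply/forallP => j; apply/forallP => i1; apply/forallP => i2; apply/implyP => lt12.
  rewrite !ffunE.
  have := sorted_ltn_nth (@ltc_trans N) c0 ss i1 i2 (ltn_ord i1) (ltn_ord i2) lt12.
  by move/forallP; apply.
have -> : \sum_(c <- s) colv w c = align_score S w pi.
  rewrite (big_nth c0) big_mkord /align_score; apply: eq_bigr => i _.
  rewrite /colv; congr S; apply/ffunP => j; by rewrite !ffunE.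
rewrite /opt_score.
apply: le_trans (le_bigmax _ _ (Ordinal hk)) => /=.
exact: (le_bigmax_cond _ _ hal).
Qed.

Lemma ext N (w : words A m N) :
  exists s : seq (col N), sorted (@ltc N) s /\ opt_score S w <= \sum_(c <- s) colv w c.
Proof.
have := lexx (opt_score S w); rewrite {2}/opt_score.
case/bigmax_geP => [H|[k _]]; first by exists [::]; rewrite big_nil.
case/bigmax_geP => [H|[pi hal H]]; first by exists [::]; rewrite big_nil.
exists [seq [ffun j => pi j i] | i <- enum 'I_k]; split.
  rewrite sorted_map.
  have : sorted (relpre val ltn) (enum 'I_k).
    by rewrite -sorted_map val_enum_ord iota_ltn_sorted.
  apply: sub_sorted => i1 i2 /= lt12; apply/forallP => j; rewrite !ffunE.
  by have := forallP hal j => /forallP /(_ i1) /forallP /(_ i2) /implyP; apply.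
apply: (le_trans H); rewrite big_map big_enum /= /align_score le_eqVlt; apply/orP; left.
apply/eqP; apply: eq_bigr => i _; rewrite /colv; congr S; apply/ffunP => j; by rewrite !ffunE.
Qed.

End Al.

Section Chunk.
Variables (R : realType) (A : finType) (m : nat) (S : {ffun 'I_m -> A} -> R).
Variables (N B : nat).
Hypothesis hmB : (m <= B)%N.

Definition lec (c1 c2 : col m N) := [forall j, (c1 j <= c2 j)%N].
Definition inbox (h e : col m N) (c : col m N) := [forall j, (h j <= c j <= e j)%N].
Definition fit (h c : col m N) := (\sum_j (c j - h j).+1 <= B)%N.
Definition region (s : seq (col m N)) :=
  if s is h :: _ then (\sum_j (N - h j))%N else 0%N.

Lemma ltc_lec (c1 c2 : col m N) : ltc c1 c2 -> lec c1 c2.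
Proof. move/forallP=> H; apply/forallP=> j; exact: ltnW. Qed.
Lemma lec_trans : transitive lec.
Proof.
move=> c2 c1 c3 /forallP H1 /forallP H2; apply/forallP => j.
exact: leq_trans (H1 j) (H2 j).
Qed.
Lemma lecc c : lec c c. Proof. by apply/forallP. Qed.

Lemma sorted_le_last (h : col m N) t :
  sorted (@ltc m N) (h :: t) -> forall c, c \in h :: t -> lec c (last h t).
Proof.
elim: t h => [|c1 t IH] h /=.
  by move=> _ c; rewrite inE => /eqP ->; apply: lecc.
case/andP => hc1 pt c; rewrite inE => /orP [/eqP ->|ct].
  apply: lec_trans (ltc_lec hc1) _; apply: IH => //; exact: mem_head.
exact: IH.
Qed.

Lemma sorted_ge_head (h : col m N) t :
  sorted (@ltc m N) (h :: t) -> forall c, c \in h :: t -> lec h c.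
Proof.
move=> /= pt c; rewrite inE => /orP [/eqP ->|ct]; first exact: lecc.
have := order_path_min (@ltc_trans m N) pt => /allP /(_ c ct); exact: ltc_lec.
Qed.

Lemma split_fit (h : col m N) t :
  all (fit h) t \/ exists p d rest, t = p ++ d :: rest /\ all (fit h) p /\ ~~ fit h d.
Proof.
elim: t => [|c t [IH|[p [d [rest [-> [H1 H2]]]]]]]; first by left.
- case fc: (fit h c); first by left; rewrite /= fc.
  by right; exists [::], c, t; rewrite fc.
- case fc: (fit h c).
    by right; exists (c :: p), d, rest; rewrite /= fc.
  by right; exists [::], c, (p ++ d :: rest); rewrite fc.
Qed.

Lemma fit_hh h : fit h h.
Proof.
rewrite /fit (eq_bigr (fun=> 1%N)) ?sum1_card ?card_ord // => j _.
by rewrite subnn.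
Qed.

Variable (w : words A m N) (x s0 : R).
Hypotheses (hx : 0 < x) (hs0 : 0 <= s0) (hs : forall c, colv S w c <= s0).

Definition good_chunk := exists (c : seq (col m N)) (h e : col m N),
  [/\ sorted (@ltc m N) c, all (inbox h e) c, lec h e, fit h e &
      x - s0 <= \sum_(c0 <- c) colv S w c0].

Lemma chunk_of (h : col m N) t :
  sorted (@ltc m N) (h :: t) -> all (fit h) (h :: t) ->
  x - s0 <= \sum_(c0 <- h :: t) colv S w c0 -> good_chunk.
Proof.
move=> ss af sc; exists (h :: t), h, (last h t); split => //.
- apply/allP => c cin; apply/forallP => j.
  have /forallP/(_ j) -> := sorted_ge_head ss cin.
  by have /forallP/(_ j) -> := sorted_le_last ss cin.
- by apply: sorted_le_last ss _ (mem_head _ _).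
- by move/allP: af; apply; rewrite mem_last.
Qed.

Lemma chunk q (s : seq (col m N)) : sorted (@ltc m N) s ->
  q%:R * x <= \sum_(c <- s) colv S w c -> (region s < q * B.+1)%N -> good_chunk.
Proof.
elim: q s => [|q IH] s ss hsum hreg; first by rewrite mul0n ltn0 in hreg.
case: s ss hsum hreg => [|h s'] ss hsum hreg.
  by move: hsum; rewrite big_nil pmulr_rle0 ?ltr0n // => /(lt_le_trans hx); rewrite ltxx.
have [af|[p [d [rest [es [afp nfd]]]]]] := split_fit h (h :: s').
  apply: (chunk_of ss af); apply: le_trans _ hsum.
  apply: (@le_trans _ _ x); first by rewrite lerBlDr lerDl.
  by rewrite -{1}[x]mul1r ler_wpM2r ?(ltW hx) // ler1n.
move: ss hsum hreg; rewrite es.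
case: p es afp => [|h0 p] es afp.
  by case: es => es; rewrite -es fit_hh in nfd.
case: es afp => <- es afp ss hsum hreg.
have := ss; rewrite (sorted_pairwise (@ltc_trans m N)) pairwise_cat.
case/and3P => ar pp /= /andP [ad pr].
have sp : sorted (@ltc m N) (h :: p) by rewrite (sorted_pairwise (@ltc_trans m N)).
have sr : sorted (@ltc m N) rest by rewrite (sorted_pairwise (@ltc_trans m N)).
have [gp|lp] := lerP (x - s0) (\sum_(c0 <- h :: p) colv S w c0).
  exact: (chunk_of sp afp gp).
apply: (IH rest sr).
  move: hsum lp; rewrite big_cat /= !big_cons -natr1 mulrDl mul1r => hsum lp.
  have hd := hs d.
  move: hsum lp hd; set qx := q%:R * x; set P := \sum_(j <- p) _; set Q := \sum_(j <- rest) _.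
  move=> *; lra.
have hdin : d \in h :: (p ++ d :: rest) by rewrite !(inE, mem_cat) eqxx !orbT.
have hhd := sorted_ge_head ss hdin.
rewrite mulSn in hreg.
suff : (region rest + B.+1 <= \sum_j (N - h j))%N.
  move=> H; rewrite -(ltn_add2l B.+1) addnC; exact: leq_ltn_trans H hreg.
rewrite /fit -ltnNge in nfd.
apply: (@leq_trans (region rest + \sum_j (d j - h j).+1)); first by rewrite leq_add2l.
clear es; case: rest ar ad pr sr hdin ss hsum hreg => [|h' rest] ar ad pr sr hdin ss hsum hreg /=.
  rewrite add0n; apply: leq_sum => j _.
  move/forallP: hhd => /(_ j); move: (ltn_ord (d j)).
  move: (nat_of_ord (d j)) (nat_of_ord (h j)) => b c; clear; lia.
rewrite -big_split /=; apply: leq_sum => j _.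
move: ad => /andP [/forallP /(_ j) hdh' _].
move/forallP: hhd => /(_ j) hhd.
move: (ltn_ord (h' j)) hdh' hhd.
move: (nat_of_ord (h' j)) (nat_of_ord (d j)) (nat_of_ord (h j)) => a b c.
clear; lia.
Qed.

End Chunk.

Lemma pairwise_flatten (T I : Type) (Rl : rel T) (lt : rel I) (F : I -> seq T) (rs : seq I) :
  pairwise lt rs -> (forall r, pairwise Rl (F r)) ->
  (forall r1 r2, lt r1 r2 -> allrel Rl (F r1) (F r2)) ->
  pairwise Rl (flatten (map F rs)).
Proof.
move=> prs HF Hlt; elim: rs prs => [|r rs IH] //= /andP [ar pr].
rewrite pairwise_cat; apply/and3P; split; [|exact: HF|exact: IH].
elim: rs ar {IH pr} => [|r' rs IH] /=; first by move=> _; elim: (F r).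
move=> /andP [lr ar].
by rewrite allrel_catr Hlt // IH.
Qed.

Section Cyc.
Variables (R : realType) (A : finType) (m : nat) (S : {ffun 'I_m -> A} -> R).
Hypothesis m0 : (0 < m)%N.
Hypothesis hSsym : forall (s : {perm 'I_m}) (x : {ffun 'I_m -> A}), S [ffun j => x (s j)] = S x.
Variables (N : nat) (a : col m N) (len : 'I_m -> nat).
Hypothesis valid : forall i, (a i + len i < N)%N.

Definition rot (r : nat) (j : 'I_m) : 'I_m := Ordinal (ltn_pmod (j + r) m0).
Lemma rot_inj r : injective (rot r).
Proof.
move=> j1 j2 /(congr1 val) /= /eqP; rewrite eqn_modDr !modn_small // => /eqP.
exact: val_inj.
Qed.
Lemma rot_inj_r (j : 'I_m) : injective (fun r : 'I_m => rot r j).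
Proof.
move=> r1 r2 /(congr1 val) /= /eqP; rewrite eqn_modDl !modn_small // => /eqP.
exact: val_inj.
Qed.

Definition ell i := (len i).+1.
Definition Lam := (\sum_i ell i)%N.
Definition off (j : 'I_m) (r : nat) := (\sum_(r' < r) ell (rot r' j))%N.
Lemma offS j r : off j r.+1 = (off j r + ell (rot r j))%N.
Proof. by rewrite /off big_ord_recr. Qed.
Lemma off0 j : off j 0 = 0%N.
Proof. by rewrite /off big_ord0. Qed.
Lemma off_mono j r1 r2 : (r1 <= r2)%N -> (off j r1 <= off j r2)%N.
Proof.
move=> /subnK <-; elim: (r2 - r1)%N => [|d IH] //.
by rewrite addSn offS (leq_trans IH) // leq_addr.
Qed.
Lemma offm j : off j m = Lam.
Proof.
rewrite /Lam (reindex_inj (@rot_inj_r j)) /off; apply: eq_bigr => r _.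
by congr ell; apply: val_inj.
Qed.
Lemma Lam_gt0 : (0 < Lam)%N.
Proof. by rewrite /Lam (bigD1 (Ordinal m0)) //= /ell addSn. Qed.
Definition lam0 : 'I_Lam := Ordinal Lam_gt0.

Definition blk j k := find (fun r => (k < off j r.+1)%N) (iota 0 m).
Lemma blkP j k : (k < Lam)%N ->
  [/\ (blk j k < m)%N, (off j (blk j k) <= k)%N & (k < off j (blk j k).+1)%N].
Proof.
move=> kL.
have hh : has (fun r => (k < off j r.+1)%N) (iota 0 m).
  apply/hasP; exists m.-1; first by rewrite mem_iota add0n prednK ?leqnn.
  by rewrite prednK // offm.
have bm : (blk j k < m)%N by rewrite -[m](size_iota 0) -has_find.
split => //.
- case E: (blk j k) => [|b]; first by rewrite off0.
  have := @before_find _ 0%N (fun r => (k < off j r.+1)%N) (iota 0 m) b; rewrite -/(blk j k) E ltnSn nth_iota ?add0n.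
    by move=> /(_ isT) /negbT; rewrite -leqNgt.
  by rewrite -E ltnW.
- by have := nth_find 0%N hh; rewrite -/(blk j k) nth_iota // add0n.
Qed.
Lemma blk_uniq j k r : (r < m)%N -> (off j r <= k < off j r.+1)%N -> blk j k = r.
Proof.
move=> rm /andP [h1 h2].
have kL : (k < Lam)%N by rewrite -(offm j) (leq_trans h2) // off_mono.
have [bm b1 b2] := blkP j kL.
case: (ltngtP (blk j k) r) => // H.
- have := off_mono j H; move: b2 h1; clear; lia.
- have := off_mono j H; move: b1 h2; clear; lia.
Qed.

Definition g (y : 'I_m * 'I_Lam) : 'I_m * ('I_m * 'I_N) :=
  let j := y.1 in let k := nat_of_ord y.2 in let r := blk j k in
  (insubd j r, (rot r j, insubd (a (rot r j)) (a (rot r j) + (k - off j r))%N)).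

Lemma off_len j k : (k < Lam)%N ->
  (a (rot (blk j k) j) + (k - off j (blk j k)) < N)%N.
Proof.
move=> kL; have [_ b1 b2] := blkP j kL; rewrite offS /ell in b2.
have := valid (rot (blk j k) j); move: b1 b2; clear; lia.
Qed.

Lemma g_inj : injective g.
Proof.
move=> [j1 k1] [j2 k2] /= [] E1 E2 E3.
have [bm1 b11 b12] := blkP j1 (ltn_ord k1).
have [bm2 b21 b22] := blkP j2 (ltn_ord k2).
move/(congr1 val): E1; rewrite !val_insubd bm1 bm2 => Eb.
rewrite Eb in E2 E3 b11 b12 bm1.
have ej : j1 = j2 by apply: (@rot_inj (blk j2 k2)); apply: val_inj; exact: E2.
subst j2.
move/(congr1 val): E3; rewrite !val_insubd.
have := off_len j1 (ltn_ord k1); rewrite Eb => ->.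
rewrite (off_len j1 (ltn_ord k2)) => Ek.
congr pair; apply: val_inj => /=; move: Ek b11 b21; clear; lia.
Qed.

Definition inb (c : col m N) := [forall i, (a i <= c i <= a i + len i)%N].

Definition sh (r : nat) (c : col m N) : col m Lam :=
  [ffun j => insubd lam0 (off j r + (c (rot r j) - a (rot r j)))%N].

Lemma sh_bound r c j : inb c ->
  (off j r + (c (rot r j) - a (rot r j)) < off j r.+1)%N.
Proof.
move=> /forallP /(_ (rot r j)) H; rewrite offS /ell; move: H; clear; lia.
Qed.

Lemma sh_val r c j : (r < m)%N -> inb c ->
  nat_of_ord (sh r c j) = (off j r + (c (rot r j) - a (rot r j)))%N.
Proof.
move=> rm ic; rewrite ffunE val_insubd.
by rewrite (leq_trans (sh_bound r j ic)) // -(offm j) off_mono.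
Qed.

Lemma g_sh r c j : (r < m)%N -> inb c ->
  g (j, sh r c j) = (insubd j r, (rot r j, c (rot r j))).
Proof.
move=> rm ic; rewrite /g /= sh_val //.
have -> : blk j (off j r + (c (rot r j) - a (rot r j))) = r.
  by apply: blk_uniq => //; rewrite leq_addr sh_bound.
congr (_, (_, _)); apply: val_inj; rewrite val_insubd addKn.
move/forallP: ic => /(_ (rot r j)) /andP [h1 h2].
by rewrite subnKC // ltn_ord.
Qed.

Definition Wc (u : {ffun 'I_m * ('I_m * 'I_N) -> A}) (r : 'I_m) : words A m N :=
  [ffun i => [ffun q => u (r, (i, q))]].
Definition Vc (u : {ffun 'I_m * ('I_m * 'I_N) -> A}) : words A m Lam :=
  [ffun j => [ffun k => u (g (j, k))]].

Lemma colv_sh u (r : 'I_m) c : inb c -> colv S (Vc u) (sh r c) = colv S (Wc u r) c.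
Proof.
move=> ic; rewrite /colv -[RHS](hSsym (perm (@rot_inj r))); congr S; apply/ffunP => j.
rewrite /Vc /Wc !ffunE permE.
have := @g_sh r c j (ltn_ord r) ic; rewrite ffunE => ->.
by have -> : insubd j r = r by apply: val_inj; rewrite val_insubd ltn_ord.
Qed.

Lemma cyc_point u (t : R) :
  (forall r : 'I_m, exists s, [/\ sorted (@ltc m N) s, all inb s &
        t <= \sum_(c <- s) colv S (Wc u r) c]) ->
  m%:R * t <= opt_score S (Vc u).
Proof.
move=> /fin_all_exists [s Hs].
pose F := fun r : 'I_m => map (sh r) (s r).
pose L := flatten (map F (enum 'I_m)).
have sL : sorted (@ltc m Lam) L.
  rewrite (sorted_pairwise (@ltc_trans m Lam)).
  apply: (@pairwise_flatten _ 'I_m _ (fun r1 r2 : 'I_m => (r1 < r2)%N) F).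
  - have tr : transitive (fun r1 r2 : 'I_m => (r1 < r2)%N).
      by move=> ? ? ?; exact: ltn_trans.
    rewrite -(sorted_pairwise tr).
    have : sorted ltn (map val (enum 'I_m)) by rewrite val_enum_ord iota_ltn_sorted.
    by rewrite sorted_map.
  - move=> r; have [ss ai _] := Hs r.
    rewrite -(sorted_pairwise (@ltc_trans m Lam)) /F sorted_map.
    apply: (@sub_in_sorted _ inb _ _ _ _ ai ss) => c1 c2 i1 i2 /forallP lt12; apply/forallP => j.
    rewrite unfold_in in i1; rewrite unfold_in in i2.
    rewrite /= !sh_val //; move: (lt12 (rot r j)) i1 i2.
    move=> h0 /forallP /(_ (rot r j)) /andP [h1 _] /forallP /(_ (rot r j)) /andP [h2 _].
    move: h0 h1 h2; clear; lia.
  - move=> r1 r2 lt12; apply/allrelP => c1 c2 /mapP [d1 d1i ->] /mapP [d2 d2i ->].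
    have [_ a1 _] := Hs r1; have [_ a2 _] := Hs r2.
    have i1 := allP a1 d1 d1i; have i2 := allP a2 d2 d2i.
    apply/forallP => j; rewrite !sh_val //.
    have := @sh_bound r1 d1 j i1; have := off_mono j lt12.
    move: (off j r2) (off j r1.+1) => x1 x2; clear; lia.
apply: le_trans (lift_le S m0 (Vc u) sL).
rewrite /L big_flatten /= big_map big_enum /=.
rewrite mulr_natl -[X in t *+ X]card_ord -sumr_const; apply: ler_sum => r _.
have [_ ai st] := Hs r; rewrite big_map; apply: le_trans st _.
rewrite le_eqVlt; apply/orP; left; apply/eqP.
rewrite big_seq_cond [RHS]big_seq_cond; apply: eq_bigr => c /andP [ci _].
by rewrite colv_sh // (allP ai).
Qed.

End Cyc.

Lemma prod_ind_le (R : realType) (I : finType) (b : I -> bool) (c : bool) :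
  ((forall i, b i) -> c) -> \prod_i ((b i)%:R : R) <= (c%:R : R).
Proof.
move=> H; case: (boolP [forall i, b i]) => [/forallP Hb|].
  by rewrite big1 ?H // => i _; rewrite Hb.
rewrite negb_forall => /existsP [i /negbTE bi].
by rewrite (bigD1 i) //= bi mul0r ler0n.
Qed.

Section Prob.
Variables (R : realType) (A : finType) (m : nat) (p : A -> R) (S : {ffun 'I_m -> A} -> R).
Hypotheses (hp0 : forall a, 0 <= p a) (hp1 : \sum_a p a = 1).
Hypothesis m0 : (0 < m)%N.
Hypothesis hSsym : forall (s : {perm 'I_m}) (x : {ffun 'I_m -> A}), S [ffun j => x (s j)] = S x.

Lemma wt_ge0 (X : finType) (u : {ffun X -> A}) : 0 <= wt p u.
Proof. by apply: prodr_ge0 => x _. Qed.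

Definition Pr N (E : words A m N -> bool) :=
  \sum_(w : words A m N) (\prod_j \prod_i p (w j i)) * (E w)%:R.

Definition curry (I J : finType) (u : {ffun I * J -> A}) : {ffun I -> {ffun J -> A}} :=
  [ffun i => [ffun j => u (i, j)]].

Lemma Pr_flat N E : Pr E = \sum_(u : {ffun 'I_m * 'I_N -> A}) wt p u * (E (curry u))%:R.
Proof. exact: flat_sum. Qed.

Lemma Pr_ge0 N E : 0 <= @Pr N E.
Proof.
apply: sumr_ge0 => w _; apply: mulr_ge0 => //.
by apply: prodr_ge0 => j _; apply: prodr_ge0.
Qed.

Lemma prob_Pr N (t : R) : prob_L_ge p S N t = Pr (fun w : words A m N => t <= opt_score S w).
Proof.
rewrite /prob_L_ge /Pr big_mkcond /=; apply: eq_bigr => w _.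
by case: ifP; rewrite ?mulr1 ?mulr0.
Qed.

Lemma prefix_opt L M (le : (L <= M)%N) (u : {ffun 'I_m * 'I_M -> A}) :
  opt_score S (curry [ffun y : 'I_m * 'I_L => u (y.1, widen_ord le y.2)]) <=
  opt_score S (curry u).
Proof.
have [s [ss H]] := ext S (curry [ffun y : 'I_m * 'I_L => u (y.1, widen_ord le y.2)]).
apply: le_trans H _.
pose wc := fun c : col m L => [ffun j => widen_ord le (c j)] : col m M.
have ss' : sorted (@ltc m M) (map wc s).
  rewrite sorted_map; apply: sub_sorted ss => c1 c2 /forallP H.
  by apply/forallP => j; rewrite /wc !ffunE; exact: H.
apply: le_trans (lift_le S m0 (curry u) ss').
rewrite big_map le_eqVlt; apply/orP; left; apply/eqP; apply: eq_bigr => c _.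
by rewrite /colv; congr S; apply/ffunP => j; rewrite /wc !ffunE.
Qed.

Lemma prefix_le L M (le : (L <= M)%N) (t : R) :
  \sum_(v : {ffun 'I_m * 'I_L -> A}) wt p v * (t <= opt_score S (curry v))%R%:R
  <= prob_L_ge p S M t.
Proof.
rewrite prob_Pr Pr_flat.
have ginj : injective (fun y : 'I_m * 'I_L => (y.1, widen_ord le y.2)).
  move=> [j1 k1] [j2 k2] /= [] -> E; congr pair; exact: val_inj.
rewrite -(pf hp1 ginj (fun v => (t <= opt_score S (curry v))%R%:R)).
apply: ler_sum => u _; apply: ler_wpM2l; first exact: wt_ge0.
rewrite ler_nat; case: (boolP (t <= _)) => //= H.
by rewrite (le_trans H) // prefix_opt.
Qed.

Variables (N : nat) (a : col m N) (len : 'I_m -> nat).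
Hypothesis valid : forall i, (a i + len i < N)%N.
Variable t : R.

Definition Ev (w : words A m N) : bool :=
  `[< exists s, [/\ sorted (@ltc m N) s, all (inb a len) s &
        t <= \sum_(c <- s) colv S w c] >].

Lemma Pr_pow : Pr Ev ^+ m <=
  \sum_(v : {ffun 'I_m * 'I_(Lam len) -> A}) wt p v * (m%:R * t <= opt_score S (curry v))%R%:R.
Proof.
have E1 : forall y : R, y ^+ m = \prod_(r < m) y.
  by move=> y; rewrite -{1}(card_ord m) -prodr_const.
rewrite Pr_flat E1 bigA_distr_bigA /=.
under eq_bigr do rewrite big_split /=.
rewrite /wt flat_sum.
rewrite -(pf hp1 (g_inj valid) (fun v => (m%:R * t <= opt_score S (curry v))%R%:R)).
apply: ler_sum => u _; apply: ler_wpM2l; first exact: wt_ge0.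
apply: prod_ind_le => H.
have -> : curry [ffun y => u (g m0 a y)] = Vc m0 a len u.
  by apply/ffunP => j; apply/ffunP => k; rewrite !ffunE.
apply/(cyc_point m0 hSsym) => r.
have /asboolP := H r.
have -> : curry ([ffun i => [ffun j => u (i, j)]] r) = Wc u r.
  by apply/ffunP => j; apply/ffunP => k; rewrite !ffunE.
by [].
Qed.

Lemma Pr_powR M (hL : (Lam len <= M)%N) :
  Pr Ev <= powR (prob_L_ge p S M (m%:R * t)) (m%:R)^-1.
Proof.
have q0 := Pr_ge0 Ev.
have hq : Pr Ev ^+ m <= prob_L_ge p S M (m%:R * t).
  exact: le_trans Pr_pow (prefix_le hL _).
have -> : Pr Ev = powR (Pr Ev ^+ m) (m%:R)^-1.
  rewrite -powR_mulrn // -powRrM mulfV ?powRr1 // pnatr_eq0 -lt0n //.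
apply: (@ge0_ler_powR _ (m%:R^-1)).
- by rewrite invr_ge0 ler0n.
- by rewrite nnegrE exprn_ge0.
- by rewrite nnegrE; apply: le_trans hq; rewrite exprn_ge0.
- exact: hq.
Qed.

End Prob.

Unset Implicit Arguments.
Theorem proposition2p3 (R : realType) (m : nat) (hm : (2 <= m)%N)
  (Alph : {fset R})
  (p : Alph -> R) (hp0 : forall a, 0 <= p a) (hp1 : \sum_a p a = 1)
  (S : {ffun 'I_m -> Alph} -> R)
  (hS0 : forall x, 0 <= S x)
  (hSnz : exists x, S x != 0)
  (hSsym : forall (s : {perm 'I_m}) (x : {ffun 'I_m -> Alph}), S [ffun j => x (s j)] = S x)
  (hSlip : exists D : R, 0 < D /\
     forall x y : {ffun 'I_m -> Alph},
       (#|[set j | x j != y j]| <= 1)%N -> `|S x - S y| <= D)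
  (n : nat) (x : R) (hx : 0 < x) :
  prob_L_ge p S (m ^ 2 * n) (m%:R ^+ 2 * x)
  <= (m%:R ^+ (4 * m) * n%:R ^+ (2 * m)) / 2 ^+ m
     * powR (prob_L_ge p S (m * n) (m%:R * (x - smax S))) (m%:R)^-1.
Proof.
have m0 : (0 < m)%N by apply: leq_trans hm.
have hsm0 : 0 <= smax S by exact: bigmax_ge_id.
have hsc : forall N (w : words Alph m N) c, colv S w c <= smax S.
  by move=> N w c; rewrite /colv /smax; apply: le_bigmax.
have [n0|npos] := posnP n.
  subst n; rewrite muln0.
  have -> : (0%:R : R) ^+ (2 * m) = 0 by rewrite mulr0n expr0n muln_eq0 /= gtn_eqF.
  rewrite mulr0 mul0r mul0r.
  rewrite /prob_L_ge big1 // => w Hw.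
  have [s [ss Hs]] := ext S w.
  have := size_sorted_le m0 ss; rewrite leqn0 => /nilP es.
  move: Hs; rewrite es big_nil => H.
  have : 0 < m%:R ^+ 2 * x by rewrite mulr_gt0 // exprn_gt0 // ltr0n.
  by move=> /(lt_le_trans) /(_ (le_trans Hw H)); rewrite ltxx.
set N := (m ^ 2 * n)%N; set B := (m * n)%N; set t0 := x - smax S.
set Q := prob_L_ge p S B (m%:R * t0).
have B0 : (0 < B)%N by rewrite muln_gt0 m0.
pose b0 : 'I_B := Ordinal B0.
pose Cfg := ({ffun 'I_m -> 'I_N} * {ffun 'I_m -> 'I_B})%type.
pose valid (c : Cfg) := [forall i, (c.1 i + c.2 i < N)%N] && (\sum_i (c.2 i).+1 <= B)%N.
pose Ec (c : Cfg) (w : words Alph m N) :=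
  valid c && Ev S c.1 (fun i => nat_of_ord (c.2 i)) t0 w.
have det : forall w : words Alph m N, m%:R ^+ 2 * x <= opt_score S w -> exists c, Ec c w.
  move=> w Hw.
  have [s [ss Hs]] := ext S w.
  have hmB : (m <= B)%N by rewrite /B leq_pmulr.
  have hsum : (m ^ 2)%:R * x <= \sum_(c <- s) colv S w c.
    by rewrite natrX; apply: le_trans Hs.
  have hreg : (region s < m ^ 2 * B.+1)%N.
    apply: (@leq_ltn_trans (m * N)).
      case: s {ss Hs hsum} => [|h s'] //=.
      apply: (@leq_trans (\sum_(j < m) N)); last by rewrite sum_nat_const card_ord.
      apply: leq_sum => j _; exact: leq_subr.
    rewrite /N /B; move: npos hm; clear; nia.
  have [c [h [e [sc ac le fe sumc]]]] := chunk hmB hx hsm0 (hsc N w) ss hsum hreg.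
  have he : forall i, (e i - h i < B)%N.
    move=> i; move: fe; rewrite /fit (bigD1 i) //= => fe.
    exact: leq_trans (leq_addr _ _) fe.
  pose ln : {ffun 'I_m -> 'I_B} := [ffun i => insubd b0 (e i - h i)%N].
  have lnE : forall i, nat_of_ord (ln i) = (e i - h i)%N.
    by move=> i; rewrite ffunE val_insubd he.
  exists (h, ln); apply/andP; split.
    apply/andP; split.
      apply/forallP => i /=; rewrite lnE; move/forallP: le => /(_ i).
      by have := ltn_ord (e i); clear; lia.
    by apply: leq_trans fe; rewrite leq_eqVlt; apply/orP; left; apply/eqP; apply: eq_bigr => i _ /=; rewrite lnE.
  apply/asboolP; exists c; split => //.
  apply/allP => c1 c1i; have := allP ac c1 c1i => /forallP H; apply/forallP => i /=.
  rewrite lnE; have := H i; move/forallP: le => /(_ i).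
  by clear; lia.
have step1 : prob_L_ge p S N (m%:R ^+ 2 * x) <= \sum_(c : Cfg) Pr p (Ec c).
  rewrite prob_Pr /Pr exchange_big /=; apply: ler_sum => w _.
  rewrite -big_distrr /=; apply: ler_wpM2l.
    by apply: prodr_ge0 => j _; apply: prodr_ge0.
  case: (boolP (m%:R ^+ 2 * x <= opt_score S w)) => /= H; last by apply: sumr_ge0 => c _; rewrite ler0n.
  have [c Hc] := det w H.
  rewrite (bigD1 c) //= Hc -[X in X <= _]addr0 lerD2l.
  by apply: sumr_ge0 => c' _; rewrite ler0n.
have step2 : forall c : Cfg, Pr p (Ec c) <= powR Q (m%:R)^-1.
  move=> c; case: (boolP (valid c)) => vc.
    have -> : Pr p (Ec c) = Pr p (Ev S c.1 (fun i => nat_of_ord (c.2 i)) t0).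
      by apply: eq_bigr => w _; rewrite /Ec vc.
    apply: (Pr_powR hp0 hp1 m0 hSsym).
      by move: vc => /andP [/forallP H _].
    by move: vc => /andP [_ H].
  have -> : Pr p (Ec c) = 0.
    by rewrite /Pr big1 // => w _; rewrite /Ec (negbTE vc) mulr0.
  exact: powR_ge0.
apply: (le_trans step1); apply: le_trans (ler_sum _ (fun c _ => step2 c)) _.
rewrite sumr_const -[X in X <= _]mulr_natl; apply: ler_wpM2r; first exact: powR_ge0.
rewrite card_prod !card_ffun !card_ord ler_pdivlMr ?exprn_gt0 // -!natrX -!natrM ler_nat.
rewrite -expnMn expnM [(n ^ (2 * m))%N]expnM -expnMn -expnMn leq_exp2r //.
rewrite /N /B; move: hm; clear; nia.
Qed.
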